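(* For every graph $G$ on vertex set $[n]$, the graph $\langle G\rangle_{K_4}$ consists of a triangle-free collection of edge-disjoint cliques.
   Context: $\langle G\rangle_{K_4}$ is the closure of $G$ under the $K_4$-bootstrap process on $K_n$: repeatedly add any edge of $K_n$ which is the only missing edge of some copy of $K_4$. A collection $\mathcal{K}$ of cliques is triangle-free if there do not exist distinct vertices $u,v,w$ and cliques $A,B,C \in \mathcal{K}$ with $u \in V(A)\cap V(B)$, $v \in V(B) \cap V(C)$ and $w \in V(A) \cap V(C)$. *)

(* Defs.v *)
From mathcomp Require Import all_boot.
Set Implicit Arguments. Unset Strict Implicit. Unset Printing Implicit Defensive.

(* A graph on vertex set [n] = 'I_n is a symmetric irreflexive relation. *)

(* <G>_{K4}: the closure of G under the K4-bootstrap process on K_n. *)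
Inductive K4_closure (n : nat) (G : rel 'I_n) : 'I_n -> 'I_n -> Prop :=
| K4c_base u v : G u v -> K4_closure G u v
| K4c_step u v a b :
    u != v -> u != a -> u != b -> v != a -> v != b -> a != b ->
    K4_closure G u a -> K4_closure G u b ->
    K4_closure G v a -> K4_closure G v b ->
    K4_closure G a b ->
    K4_closure G u v.

Definition clique_triangle_free (n : nat) (K : {set {set 'I_n}}) : Prop :=
  ~ exists (u v w : 'I_n) (A B C : {set 'I_n}),
      [/\ [/\ u != v, v != w & u != w],
          [/\ A \in K, B \in K & C \in K],
          [/\ A != B, B != C & A != C] &
          [/\ u \in A :&: B, v \in B :&: C & w \in A :&: C]].

Definition edge_disjoint_cliques (n : nat) (K : {set {set 'I_n}}) : Prop :=
  (forall A, A \in K -> 2 <= #|A|) /\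
  (forall A B, A \in K -> B \in K -> A != B -> #|A :&: B| <= 1).

Definition graph_of_cliques (n : nat) (H : 'I_n -> 'I_n -> Prop)
    (K : {set {set 'I_n}}) : Prop :=
  forall u v : 'I_n, u != v ->
    (H u v <-> exists2 A, A \in K & (u \in A) && (v \in A)).

(* Main.v *)
Require Import Defs.
From mathcomp Require Import all_boot.
From Stdlib Require Import ClassicalEpsilon.
Set Implicit Arguments. Unset Strict Implicit.

Section S.
Variable n : nat.
Variable G : rel 'I_n.
Hypothesis Gs : symmetric G.
Hypothesis Gi : irreflexive G.

Lemma Hsym u v : K4_closure G u v -> K4_closure G v u.
Proof.
case => [u' v' g|u' v' a b h1 h2 h3 h4 h5 h6 k1 k2 k3 k4 k5].
- by apply: K4c_base; rewrite Gs.
- apply: (@K4c_step n G v' u' a b) => //; by rewrite eq_sym.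
Qed.

Definition hb (u v : 'I_n) : bool :=
  if excluded_middle_informative (K4_closure G u v) then true else false.

Lemma hbP u v : reflect (K4_closure G u v) (hb u v).
Proof. rewrite /hb; case: excluded_middle_informative => h; by constructor. Qed.

Lemma hb_sym u v : hb u v = hb v u.
Proof. by apply/hbP/hbP => /Hsym. Qed.

Lemma hb_irr u : hb u u = false.
Proof.
apply/hbP => h; inversion h as [u0 v0 g|u0 v0 a b e]; first by rewrite Gi in g.
by rewrite eqxx in e.
Qed.

Lemma hb_neq u v : hb u v -> u != v.
Proof. by apply: contraTneq => ->; rewrite hb_irr. Qed.

Lemma hb_close w z x y : w != z -> w != x -> w != y -> z != x -> z != y -> x != y ->
  hb w x -> hb w y -> hb z x -> hb z y -> hb x y -> hb w z.
Proof.
move=> e1 e2 e3 e4 e5 e6 /hbP k1 /hbP k2 /hbP k3 /hbP k4 /hbP k5; apply/hbP.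
exact: (K4c_step e1 e2 e3 e4 e5 e6 k1 k2 k3 k4 k5).
Qed.

Definition C (u v : 'I_n) : {set 'I_n} :=
  [set w | (w == u) || (w == v) || (hb u w && hb v w)].

Definition clique (A : {set 'I_n}) :=
  forall x y, x \in A -> y \in A -> x != y -> hb x y.

Lemma C_clique u v : hb u v -> clique (C u v).
Proof using Gs Gi.
move=> huv.
have memb x : x \in C u v -> [\/ x = u, x = v | hb u x && hb v x].
  rewrite inE => /orP [/orP [/eqP ->|/eqP ->]|->]; by [constructor 1|constructor 2|constructor 3].
have hvu : hb v u by rewrite hb_sym.
move=> x y /memb [->|->|/andP [hux hvx]] /memb [->|->|/andP [huy hvy]];
  rewrite ?eqxx // => nxy.
- by rewrite hb_sym.
- by rewrite hb_sym.
- have [<-|nyu] := eqVneq u y; first by rewrite hb_sym.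
  have [<-|nyv] := eqVneq v y; first by rewrite hb_sym.
  have [exu|nxu] := eqVneq x u; first by rewrite exu.
  have [exv|nxv] := eqVneq x v; first by rewrite exv.
  apply: (@hb_close x y u v) => //.
  + by rewrite eq_sym.
  + by rewrite eq_sym.
  + exact: hb_neq.
  + by rewrite hb_sym.
  + by rewrite hb_sym.
  + by rewrite hb_sym.
  + by rewrite hb_sym.
Qed.

Lemma ext A x y w z : clique A -> x \in A -> y \in A -> x != y ->
  hb w x -> hb w y -> z \in A -> w != z -> hb w z.
Proof using Gs Gi.
move=> cA xA yA nxy hwx hwy zA nwz.
have [->|nzx] := eqVneq z x; first by [].
have [->|nzy] := eqVneq z y; first by [].
apply: (@hb_close w z x y) => //.
- exact: hb_neq.
- exact: hb_neq.
- by apply: cA.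
- by apply: cA.
- by apply: cA.
Qed.

Lemma C_eq u v x y : hb u v -> x \in C u v -> y \in C u v -> x != y -> C x y = C u v.
Proof using Gs Gi.
move=> huv xC yC nxy.
have cl := C_clique huv.
apply/setP => w; apply/idP/idP.
- rewrite [w \in C x y]inE.
  case/orP => [/orP [/eqP -> | /eqP ->] | /andP [hxw hyw]] //.
  rewrite inE.
  have [->|nwu] := eqVneq w u; first by [].
  have [->|nwv] := eqVneq w v; first by [].
  rewrite /=.
  rewrite hb_sym in hxw; rewrite hb_sym in hyw.
  rewrite (hb_sym u) (hb_sym v).
  apply/andP; split; apply: (ext cl xC yC nxy hxw hyw); rewrite ?inE ?eqxx ?orbT //.
- move=> wC; rewrite inE.
  have [->|nwx] := eqVneq w x; first by [].
  have [->|nwy] := eqVneq w y; first by [].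
  rewrite /= (cl x w) ?(cl y w) // eq_sym //.
Qed.

End S.

Theorem mainTheorem18 (n : nat) (G : rel 'I_n) :
  symmetric G -> irreflexive G ->
  exists K : {set {set 'I_n}},
    [/\ edge_disjoint_cliques K,
        clique_triangle_free K &
        graph_of_cliques (K4_closure G) K].
Proof.
move=> Gs Gi.
pose hb := hb G.
pose K := [set C G p.1 p.2 | p in [set p : 'I_n * 'I_n | hb p.1 p.2]].
have memK A : A \in K -> exists u v, hb u v /\ A = C G u v.
  by case/imsetP => [[u v]]; rewrite inE /= => huv ->; exists u, v.
have uC u v : u \in C G u v by rewrite inE eqxx.
have vC u v : v \in C G u v by rewrite inE eqxx orbT.
have CK u v : hb u v -> C G u v \in K.
  by move=> huv; apply/imsetP; exists (u, v); rewrite ?inE.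
exists K; split.
- split.
  + move=> A /memK [u [v [huv ->]]].
    apply/card_gt1P; exists u, v; split => //; exact: (hb_neq Gi huv).
  + move=> A B /memK [u [v [huv ->]]] /memK [u' [v' [huv' ->]]] nAB.
    rewrite leqNgt; apply/negP => /(card_gt1P) [x [y [xI yI nxy]]].
    move: xI yI; rewrite !in_setI => /andP [x1 x2] /andP [y1 y2].
    move/eqP: nAB; apply.
    by rewrite -(C_eq Gs Gi huv x1 y1 nxy) -(C_eq Gs Gi huv' x2 y2 nxy).
- case=> [u [v [w [A [B [D [[nuv nvw nuw] [AK BK DK] [nAB nBD nAD]
           [uAB vBD wAD]]]]]]]].
  move: uAB vBD wAD; rewrite !in_setI => /andP [uA uB] /andP [vB vD] /andP [wA wD].
  case/memK: AK => [a [a' [haa' eA]]].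
  case/memK: BK => [b [b' [hbb' eB]]].
  case/memK: DK => [d [d' [hdd' eD]]].
  have eA' z : z \in A -> z \in C G a a' by rewrite eA.
  have eB' z : z \in B -> z \in C G b b' by rewrite eB.
  have huv : hb u v by rewrite eB in uB vB; apply: (C_clique Gs Gi hbb').
  have hvw : hb v w by rewrite eD in vD wD; apply: (C_clique Gs Gi hdd').
  have huw : hb u w by rewrite eA in uA wA; apply: (C_clique Gs Gi haa').
  have EA0 : A = C G u w by rewrite eA (C_eq Gs Gi haa' (eA' _ uA) (eA' _ wA) nuw).
  have vA : v \in A.
    rewrite EA0 inE; apply/orP; right; apply/andP; split => //; by rewrite hb_sym.
  have EA' : A = C G u v.
    by rewrite eA (C_eq Gs Gi haa' (eA' _ uA) (eA' _ vA) nuv).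
  have EB : B = C G u v.
    by rewrite eB (C_eq Gs Gi hbb' (eB' _ uB) (eB' _ vB) nuv).
  by move/eqP: nAB; apply; rewrite EA' EB.
- move=> u v nuv; split.
  + move=> /hbP h; exists (C G u v); [exact: CK | by rewrite uC vC].
  + case=> A /memK [a [b [hab ->]]] /andP [uA vA].
    exact/hbP/(C_clique Gs Gi hab).
Qed.
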